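(* Let $0<q<1$, $I=[0,b)$ with $0<b\le\infty$, $R,S,T:I\to\mathbb{R}$ continuous. For an admissible function $u$ and $t\in\mathbb{R}$ with $1+tJ_u(x)\ne0$ on $I$ define $(\mathcal{B}^+_tu)(x)=u(x)+\dfrac{tE_u(x)}{1+tJ_u(x)}$. Then for $t_1,t_2\in\mathbb{R}$ and admissible $u_0$ such that $\mathcal{B}^+_{t_2}u_0$ is defined and admissible, $\mathcal{B}^+_{t_1}(\mathcal{B}^+_{t_2}u_0)$ is defined, and $1-(1-q)x(R(x)+S(x)\,\mathcal{B}^+_{t_1}\mathcal{B}^+_{t_2}u_0(x))>0$ on $I$, one has $$\mathcal{B}^+_{t_1}\circ\mathcal{B}^+_{t_2}u_0=\mathcal{B}^+_{t_1+t_2}u_0 .$$ In particular, for a fixed $V$, the maps $\mathcal{B}^+_t$ act (where defined) as a one-parameter group on the solutions of the $q$-Riccati equation $V(x)=\partial_qu(x)-T(x)u(x)+R(x)u(qx)+S(x)u(x)u(qx)$, and this action is transitive on solutions $u$ continuous on $I$ with $1-(1-q)x(R(x)+S(x)u(x))>0$ on $I$: each such solution equals $\mathcal{B}^+_tu_0$ for $t=u(0)-u_0(0)$.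
   Context: $\partial_q f(x)=\dfrac{f(x)-f(qx)}{(1-q)x}$ for $x\neq0$; $\int_0^x f(t)\,d_qt=\sum_{n\ge0}(1-q)q^nx\,f(q^nx)$. A function $u:I\to\mathbb{R}$ is admissible if it is continuous on $I$ and for all $y\in I$: $1-(1-q)y(R(y)+u(y)S(y))>0$ and $1-(1-q)y(T(y)-u(qy)S(y))>0$. For admissible $u$: $$E_u(x)=\exp\Big(\frac{1}{1-q}\int_0^x\frac1y\ln\frac{1-(1-q)y[R(y)+u(y)S(y)]}{1-(1-q)y[T(y)-u(qy)S(y)]}d_qy\Big),\qquad J_u(x)=\int_0^x\frac{S(y)E_u(y)}{1-(1-q)y[R(y)+u(y)S(y)]}d_qy.$$ *)

(* Defs.v *)
From Stdlib Require Import Reals.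
From Coquelicot Require Import Coquelicot.
Open Scope R_scope.

Definition inI (b : Rbar) (x : R) : Prop := 0 <= x /\ Rbar_lt (Finite x) b.

Definition cont_on (b : Rbar) (f : R -> R) : Prop :=
  forall x, inI b x -> filterlim f (within (inI b) (locally x)) (locally (f x)).

(* Jackson q-derivative (for x <> 0). *)
Definition qderiv (q : R) (f : R -> R) (x : R) : R :=
  (f x - f (q * x)) / ((1 - q) * x).

Definition qint (q : R) (f : R -> R) (x : R) : R :=
  Series (fun n => (1 - q) * q ^ n * x * f (q ^ n * x)).

Definition admissible (q : R) (b : Rbar) (R0 S T : R -> R) (u : R -> R) : Prop :=
  cont_on b u /\
  forall y, inI b y ->
    1 - (1 - q) * y * (R0 y + u y * S y) > 0 /\
    1 - (1 - q) * y * (T y - u (q * y) * S y) > 0.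

Definition Eu (q : R) (R0 S T : R -> R) (u : R -> R) (x : R) : R :=
  exp (/ (1 - q) *
       qint q (fun y => / y * ln ((1 - (1 - q) * y * (R0 y + u y * S y)) /
                                  (1 - (1 - q) * y * (T y - u (q * y) * S y)))) x).

Definition Ju (q : R) (R0 S T : R -> R) (u : R -> R) (x : R) : R :=
  qint q (fun y => S y * Eu q R0 S T u y / (1 - (1 - q) * y * (R0 y + u y * S y))) x.

Definition Bplus (q : R) (R0 S T : R -> R) (t : R) (u : R -> R) (x : R) : R :=
  u x + t * Eu q R0 S T u x / (1 + t * Ju q R0 S T u x).

Definition Bplus_defined (q : R) (b : Rbar) (R0 S T : R -> R) (t : R) (u : R -> R) : Prop :=
  forall x, inI b x -> 1 + t * Ju q R0 S T u x <> 0.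

(* u solves the q-Riccati equation with right-hand side V on I (x <> 0, where
   the q-derivative is defined). *)
Definition qRiccati_sol (q : R) (b : Rbar) (R0 S T V : R -> R) (u : R -> R) : Prop :=
  forall x, inI b x -> x <> 0 ->
    V x = qderiv q u x - T x * u x + R0 x * u (q * x) + S x * u x * u (q * x).

(* Main.v *)
Require Import Defs.
From Stdlib Require Import Reals Lra Lia.
From Coquelicot Require Import Coquelicot.
Open Scope R_scope.

Lemma inI0 b x : inI b x -> inI b 0.
Proof.
  intros [H1 H2]. split; [lra|]. eapply Rbar_le_lt_trans; [|exact H2]. simpl; lra.
Qed.

Lemma inI_le b x y : inI b x -> 0 <= y <= x -> inI b y.
Proof.
  intros [H1 H2] Hy. split; [lra|]. eapply Rbar_le_lt_trans; [|exact H2]. simpl; lra.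
Qed.

Lemma pow_bounds q n : 0 < q < 1 -> 0 < q ^ n <= 1.
Proof.
  intros Hq. split. apply pow_lt; lra. rewrite <- (pow1 n). apply pow_incr; lra.
Qed.

Lemma inI_pow b q x n : 0 < q < 1 -> inI b x -> inI b (q ^ n * x).
Proof.
  intros Hq Hx. apply (inI_le b x); auto. destruct Hx as [Hx _].
  pose proof (pow_bounds q n Hq). split; nra.
Qed.

Lemma inI_q b q x : 0 < q < 1 -> inI b x -> inI b (q * x).
Proof.
  intros Hq Hx. pose proof (inI_pow b q x 1 Hq Hx). simpl in H. rewrite Rmult_1_r in H. exact H.
Qed.

Lemma lim_qnx q x : 0 < q < 1 -> is_lim_seq (fun n => q ^ n * x) 0.
Proof.
  intros Hq. replace (Finite 0) with (Rbar_mult 0 x) by (simpl; f_equal; ring).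
  apply is_lim_seq_scal_r. apply is_lim_seq_geom. rewrite Rabs_pos_eq; lra.
Qed.

Lemma seqlim b q f x : 0 < q < 1 -> cont_on b f -> inI b x ->
  is_lim_seq (fun n => f (q ^ n * x)) (f 0).
Proof.
  intros Hq Hf Hx. pose proof (Hf 0 (inI0 b x Hx)) as H0.
  unfold is_lim_seq. simpl.
  eapply filterlim_comp; [|exact H0].
  intros P HP. unfold within in HP.
  pose proof (lim_qnx q x Hq) as L. unfold is_lim_seq in L. simpl in L.
  specialize (L _ HP). unfold filtermap in *.
  eapply filter_imp; [|exact L]. intros n Hn. apply Hn. apply inI_pow; auto.
Qed.

Lemma ev_bounded (s : nat -> R) N M :
  (forall n, (N <= n)%nat -> Rabs (s n) <= M) -> exists M', forall n, Rabs (s n) <= M'.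
Proof.
  revert M. induction N as [|N IH]; intros M H.
  - exists M. intros n; apply H; lia.
  - apply (IH (Rmax M (Rabs (s N)))). intros n Hn.
    destruct (Nat.eq_dec n N) as [->|Hne]. apply Rmax_r.
    eapply Rle_trans; [apply H; lia|apply Rmax_l].
Qed.

Lemma conv_bounded (s : nat -> R) (l : R) :
  is_lim_seq s l -> exists M, forall n, Rabs (s n) <= M.
Proof.
  intros Hs. apply is_lim_seq_spec in Hs.
  destruct (Hs (mkposreal 1 Rlt_0_1)) as [N HN].
  apply (ev_bounded s N (Rabs l + 1)). intros n Hn. specialize (HN n Hn). simpl in HN.
  pose proof (Rabs_triang_inv (s n) l). lra.
Qed.

Lemma Series_geom_c q c : 0 < q < 1 -> Series (fun n => c * q ^ n) = c / (1 - q).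
Proof.
  intros Hq. rewrite Series_scal_l. unfold Rdiv. f_equal.
  apply is_series_unique. apply is_series_geom. rewrite Rabs_pos_eq; lra.
Qed.

Lemma ex_geom_c q c : 0 < q < 1 -> ex_series (fun n => c * q ^ n).
Proof.
  intros Hq. eexists. apply (is_series_scal_l c (fun n => q ^ n)).
  apply is_series_geom. rewrite Rabs_pos_eq; lra.
Qed.

Definition qterms q f x := fun n => (1 - q) * q ^ n * x * f (q ^ n * x).

Lemma qterm_bound q f x M n : 0 < q < 1 -> 0 <= x -> (forall n, Rabs (f (q ^ n * x)) <= M) ->
  Rabs (qterms q f x n) <= ((1 - q) * x * M) * q ^ n.
Proof.
  intros Hq Hx Hb. unfold qterms. pose proof (pow_bounds q n Hq).
  rewrite !Rabs_mult. rewrite (Rabs_pos_eq (1-q)) by lra. rewrite (Rabs_pos_eq (q^n)) by lra.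
  rewrite (Rabs_pos_eq x) by lra. specialize (Hb n).
  assert (0 <= (1-q) * q^n * x) by (apply Rmult_le_pos; [apply Rmult_le_pos|]; lra).
  nra.
Qed.

Lemma qint_ex q f x M : 0 < q < 1 -> 0 <= x -> (forall n, Rabs (f (q ^ n * x)) <= M) ->
  ex_series (qterms q f x).
Proof.
  intros Hq Hx Hb. apply (@ex_series_le R_AbsRing R_CompleteNormedModule _ (fun n => ((1 - q) * x * M) * q ^ n)).
  - intros n. apply (qterm_bound q f x M n Hq Hx Hb).
  - apply ex_geom_c; auto.
Qed.

Lemma qint_abs_ex q f x M : 0 < q < 1 -> 0 <= x -> (forall n, Rabs (f (q ^ n * x)) <= M) ->
  ex_series (fun n => Rabs (qterms q f x n)).
Proof.
  intros Hq Hx Hb. apply (@ex_series_le R_AbsRing R_CompleteNormedModule _ (fun n => ((1 - q) * x * M) * q ^ n)).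
  - intros n. change (norm (Rabs (qterms q f x n))) with (Rabs (Rabs (qterms q f x n))).
    rewrite Rabs_Rabsolu. apply (qterm_bound q f x M n Hq Hx Hb).
  - apply ex_geom_c; auto.
Qed.

Lemma qint_shift q f x M : 0 < q < 1 -> 0 <= x -> (forall n, Rabs (f (q ^ n * x)) <= M) ->
  qint q f x = (1 - q) * x * f x + qint q f (q * x).
Proof.
  intros Hq Hx Hb. unfold qint. rewrite Series_incr_1.
  - f_equal. simpl. rewrite Rmult_1_l. ring.
    apply Series_ext. intros n.
    replace (q ^ S n * x) with (q ^ n * (q * x)) by (simpl; ring). simpl. ring.
  - apply (qint_ex q f x M Hq Hx Hb).
Qed.

Lemma qint_bound q f x M : 0 < q < 1 -> 0 <= x -> (forall n, Rabs (f (q ^ n * x)) <= M) ->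
  Rabs (qint q f x) <= x * M.
Proof.
  intros Hq Hx Hb. unfold qint. eapply Rle_trans.
  apply (Series_Rabs (qterms q f x)). apply (qint_abs_ex q f x M Hq Hx Hb).
  eapply Rle_trans. apply (Series_le _ (fun n => ((1 - q) * x * M) * q ^ n)).
  - intros n. split. apply Rabs_pos. apply (qterm_bound q f x M n Hq Hx Hb).
  - apply ex_geom_c; auto.
  - rewrite Series_geom_c by auto. right. field. lra.
Qed.

Lemma qint_lim q f x M : 0 < q < 1 -> 0 <= x -> (forall n, Rabs (f (q ^ n * x)) <= M) ->
  is_lim_seq (fun m => qint q f (q ^ m * x)) 0.
Proof.
  intros Hq Hx Hb.
  assert (Hm : forall m, Rabs (qint q f (q ^ m * x)) <= q ^ m * (x * M)).
  { intros m. rewrite <- Rmult_assoc. apply qint_bound; auto.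
    pose proof (pow_bounds q m Hq); nra.
    intros n. replace (q ^ n * (q ^ m * x)) with (q ^ (n + m) * x) by (rewrite pow_add; ring).
    apply Hb. }
  apply (is_lim_seq_le_le (fun m => - (q ^ m * (x * M))) _ (fun m => q ^ m * (x * M))).
  - intros m. specialize (Hm m). apply Rabs_le_between in Hm. lra.
  - apply (is_lim_seq_ext (fun m => q ^ m * (- (x * M)))). intros; ring.
    apply lim_qnx; auto.
  - apply lim_qnx; auto.
Qed.

Lemma alg2 x q t R S T ux uqx e0 j0 :
  let A := 1-(1-q)*x*(R+ux*S) in let B := 1-(1-q)*x*(T - uqx*S) in
  let E := e0*A/B in let J := j0 + (1-q)*x*(S*E/A) in
  x <> 0 -> 1 - q <> 0 -> A <> 0 -> B <> 0 -> 1 + t*j0 <> 0 -> 1 + t*J <> 0 ->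
  let vx := ux + t*E/(1+t*J) in let vqx := uqx + t*e0/(1+t*j0) in
  (vx - vqx)/((1-q)*x) - T*vx + R*vqx + S*vx*vqx = (ux - uqx)/((1-q)*x) - T*ux + R*uqx + S*ux*uqx.
Proof.
  intros A B E J H1 H2 H3 H4 H5 H6 vx vqx.
  assert (H7 : B + t * (j0 * B + (1 - q) * x * (S * e0)) <> 0).
  { replace (B + t * (j0 * B + (1 - q) * x * (S * e0))) with (B * (1 + t*J)).
    apply Rmult_integral_contrapositive; auto. unfold J, E. field. auto. }
  unfold vx, vqx, J, E in *. unfold A, B in *.
  field. repeat split; auto.
Qed.

Lemma alg_h a R S T ux uqx e j t Ey Jy Evy Evq :
  let A := 1 - a*(R + ux*S) in let B := 1 - a*(T - uqx*S) in
  A <> 0 -> B <> 0 -> e <> 0 -> 1+t*j <> 0 -> 1+t*Jy <> 0 ->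
  Ey = e*A/B -> Jy = j + a*(S*Ey/A) ->
  let vx := ux + t*Ey/(1+t*Jy) in let vqx := uqx + t*e/(1+t*j) in
  1 - a*(T - vqx*S) <> 0 ->
  Evy = Evq * (1 - a*(R+vx*S)) / (1 - a*(T - vqx*S)) ->
  Evy * (1+t*Jy)^2 / Ey = Evq * (1+t*j)^2 / e.
Proof.
  intros A B HA HB He Hj HJ HE HJy vx vqx HBv HEv.
  subst Evy. unfold vx, vqx in *. subst Jy. subst Ey.
  assert (H7 : B + t * (j * B + a * (S * e)) <> 0).
  { replace (B + t * (j * B + a * (S * e))) with (B * (1 + t*(j + a * (S * (e * A / B) / A)))).
    apply Rmult_integral_contrapositive; auto. field. auto. }
  unfold A, B in *.
  field. repeat split; auto.
Qed.

Lemma alg_k a R S ux t Ey Jy j Jvy Jvq Evy :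
  let A := 1 - a*(R + ux*S) in
  A <> 0 -> 1+t*Jy <> 0 -> 1+t*j <> 0 ->
  Jy = j + a*(S*Ey/A) ->
  let vx := ux + t*Ey/(1+t*Jy) in
  1 - a*(R+vx*S) <> 0 ->
  Evy = Ey / (1+t*Jy)^2 ->
  Jvy = Jvq + a*(S*Evy/(1 - a*(R+vx*S))) ->
  Jvy - Jy/(1+t*Jy) = Jvq - j/(1+t*j).
Proof.
  intros A HA HD Hd HJ vx HAv HE HJv. subst Jvy Evy. unfold vx in *.
  assert (H7 : A + t * (j * A + a * (S * Ey)) <> 0).
  { replace (A + t * (j * A + a * (S * Ey))) with (A * (1 + t*(j + a * (S * Ey / A)))).
    apply Rmult_integral_contrapositive; subst Jy; auto. field. auto. }
  assert (Hr : 1 - a * (R + (ux + t * Ey / (1 + t * Jy)) * S) = A * (1 + t*j) / (1 + t*Jy)).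
  { subst Jy. unfold A in *. field. auto. }
  rewrite Hr. subst Jy. field. repeat split; auto.
Qed.

Lemma alg_comp uy t1 t2 Ey Jy :
  1 + t2*Jy <> 0 -> 1 + t1*(Jy/(1+t2*Jy)) <> 0 ->
  (uy + t2*Ey/(1+t2*Jy)) + t1*(Ey/(1+t2*Jy)^2)/(1+t1*(Jy/(1+t2*Jy)))
  = uy + (t1+t2)*Ey/(1+(t1+t2)*Jy) /\ 1+(t1+t2)*Jy <> 0.
Proof.
  intros H1 H2.
  assert (H3 : 1+(t1+t2)*Jy <> 0).
  { replace (1+(t1+t2)*Jy) with ((1+t2*Jy)*(1 + t1*(Jy/(1+t2*Jy)))) by (field; auto).
    apply Rmult_integral_contrapositive; auto. }
  split; auto.
  assert (H4 : 1 + t2*Jy + t1*Jy <> 0) by (intro; apply H3; lra).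
  field. repeat split; auto.
Qed.

Lemma alg_w a R S T V ux uqx u0x u0qx :
  a <> 0 ->
  V = (ux - uqx)/a - T*ux + R*uqx + S*ux*uqx ->
  V = (u0x - u0qx)/a - T*u0x + R*u0qx + S*u0x*u0qx ->
  (ux - u0x) * (1 - a*(T - u0qx*S)) = (uqx - u0qx) * (1 - a*(R + ux*S)).
Proof.
  intros Ha H1 H2.
  assert (E : (ux - u0x) * (1 - a*(T - u0qx*S)) - (uqx - u0qx) * (1 - a*(R + ux*S))
     = a * (((ux - uqx)/a - T*ux + R*uqx + S*ux*uqx) - ((u0x - u0qx)/a - T*u0x + R*u0qx + S*u0x*u0qx)))
   by (field; auto).
  rewrite <- H1, <- H2 in E. lra.
Qed.

Lemma alg_c a R S T u0x u0qx wx wqx e j Ey Jy :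
  let A0 := 1 - a*(R + u0x*S) in let B0 := 1 - a*(T - u0qx*S) in
  A0 <> 0 -> B0 <> 0 -> 1 - a*(R + (u0x + wx)*S) <> 0 -> wx <> 0 -> wqx <> 0 ->
  Ey = e*A0/B0 -> Jy = j + a*(S*Ey/A0) ->
  wx * B0 = wqx * (1 - a*(R + (u0x + wx)*S)) ->
  Ey/wx - Jy = e/wqx - j.
Proof.
  intros A0 B0 HA HB HAu Hw Hwq HE HJ Hr. subst Jy Ey.
  assert (Hq : wqx = wx * B0 / (1 - a*(R + (u0x + wx)*S))) by (rewrite Hr; field; auto).
  subst wqx. unfold A0, B0 in *. field. repeat split; auto.
Qed.


Lemma lim_replace (s : nat -> R) (l l' : R) : is_lim_seq s l -> l = l' -> is_lim_seq s l'.
Proof. intros H ->; exact H. Qed.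

Lemma ln_bound z : 1/2 <= z -> Rabs (ln z) <= 2 * Rabs (z - 1).
Proof.
  intros Hz. assert (Hz0 : 0 < z) by lra.
  pose proof (exp_ineq1_le (ln z)) as H1. rewrite exp_ln in H1 by lra.
  pose proof (exp_ineq1_le (ln (/ z))) as H2. rewrite exp_ln in H2 by (apply Rinv_0_lt_compat; lra).
  rewrite ln_Rinv in H2 by lra.
  set (w := / z) in *. assert (Hw : z * w = 1) by (unfold w; field; lra).
  assert (0 < w) by (unfold w; apply Rinv_0_lt_compat; lra).
  apply Rabs_le. destruct (Rle_dec 1 z).
  - rewrite Rabs_pos_eq by lra. split; nra.
  - rewrite Rabs_left by lra. split; nra.
Qed.

Definition Af q (R0 S : R -> R) u y := 1 - (1 - q) * y * (R0 y + u y * S y).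
Definition Bf q (S T : R -> R) u y := 1 - (1 - q) * y * (T y - u (q * y) * S y).
Definition fE q R0 S T u y := / y * ln (Af q R0 S u y / Bf q S T u y).
Definition gJ q R0 S T u y := S y * Eu q R0 S T u y / Af q R0 S u y.

Lemma Eu_eq q R0 S T u x : Eu q R0 S T u x = exp (/ (1 - q) * qint q (fE q R0 S T u) x).
Proof. reflexivity. Qed.
Lemma Ju_eq q R0 S T u x : Ju q R0 S T u x = qint q (gJ q R0 S T u) x.
Proof. reflexivity. Qed.

Section Facts.
Variables (q : R) (b : Rbar) (R0 S T u : R -> R).
Hypothesis Hq : 0 < q < 1.
Hypotheses (HR : cont_on b R0) (HS : cont_on b S) (HT : cont_on b T).
Hypothesis Hu : admissible q b R0 S T u.

Lemma seqlim_q f x : cont_on b f -> inI b x -> is_lim_seq (fun n => f (q * (q ^ n * x))) (f 0).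
Proof.
  intros Hf Hx. apply (is_lim_seq_ext (fun n => f (q ^ n * (q * x)))).
  intros n; f_equal; ring. apply (seqlim b); auto. apply inI_q; auto.
Qed.

Lemma lim_A x : inI b x -> is_lim_seq (fun n => Af q R0 S u (q ^ n * x)) 1.
Proof.
  intros Hx. destruct Hu as [Hc _]. unfold Af.
  eapply lim_replace.
  apply is_lim_seq_minus'. apply is_lim_seq_const.
  apply is_lim_seq_mult'. apply is_lim_seq_mult'. apply is_lim_seq_const. apply lim_qnx; auto.
  apply is_lim_seq_plus'. apply (seqlim b); auto. apply is_lim_seq_mult'; apply (seqlim b); auto.
  ring.
Qed.

Lemma lim_B x : inI b x -> is_lim_seq (fun n => Bf q S T u (q ^ n * x)) 1.
Proof.
  intros Hx. destruct Hu as [Hc _]. unfold Bf.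
  eapply lim_replace.
  apply is_lim_seq_minus'. apply is_lim_seq_const.
  apply is_lim_seq_mult'. apply is_lim_seq_mult'. apply is_lim_seq_const. apply lim_qnx; auto.
  apply is_lim_seq_minus'. apply (seqlim b); auto. apply is_lim_seq_mult'.
  apply seqlim_q; auto. apply (seqlim b); auto.
  ring.
Qed.

Lemma fE_bounded x : inI b x -> exists M, forall n, Rabs (fE q R0 S T u (q ^ n * x)) <= M.
Proof.
  intros Hx. destruct (Req_dec x 0) as [->|Hx0].
  { exists (Rabs (fE q R0 S T u 0)). intros n. rewrite Rmult_0_r. lra. }
  assert (Hxp : 0 < x) by (destruct Hx; lra).
  set (g := fun y => 2 * (1 - q) * (Rabs (R0 y + u y * S y) + Rabs (T y - u (q * y) * S y))).
  assert (Hg : is_lim_seq (fun n => g (q ^ n * x))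
     (2 * (1 - q) * (Rabs (R0 0 + u 0 * S 0) + Rabs (T 0 - u (q * 0) * S 0)))).
  { destruct Hu as [Hc _]. unfold g. apply is_lim_seq_mult'. apply is_lim_seq_const.
    apply is_lim_seq_plus'.
    - apply (is_lim_seq_abs _ (Finite _)). apply is_lim_seq_plus'. apply (seqlim b); auto.
      apply is_lim_seq_mult'; apply (seqlim b); auto.
    - apply (is_lim_seq_abs _ (Finite _)). apply is_lim_seq_minus'. apply (seqlim b); auto.
      apply is_lim_seq_mult'. rewrite Rmult_0_r. apply seqlim_q; auto. apply (seqlim b); auto. }
  destruct (conv_bounded _ _ Hg) as [M HM].
  pose proof (lim_A x Hx) as LA. pose proof (lim_B x Hx) as LB.
  apply is_lim_seq_spec in LA. apply is_lim_seq_spec in LB.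
  assert (Hh : 0 < 1/2) by lra.
  destruct (LA (mkposreal _ Hh)) as [N1 H1]. destruct (LB (mkposreal _ Hh)) as [N2 H2].
  apply (ev_bounded _ (N1 + N2) M). intros n Hn.
  specialize (H1 n ltac:(lia)). specialize (H2 n ltac:(lia)). simpl in H1, H2.
  apply Rabs_def2 in H1. apply Rabs_def2 in H2. destruct H1 as [H1a H1b]. destruct H2 as [H2a H2b].
  eapply Rle_trans; [|apply (Rle_trans _ _ _ (Rle_abs _) (HM n))].
  set (y := q ^ n * x). assert (Hy : 0 < y) by (unfold y; pose proof (pow_bounds q n Hq); nra).
  unfold fE, g. fold y.
  set (A := Af q R0 S u y). set (B := Bf q S T u y).
  assert (HA : 1/2 < A) by (unfold A, y; lra).
  assert (HB : 1/2 < B) by (unfold B, y; lra).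
  rewrite ln_div by lra.
  rewrite Rabs_mult. rewrite Rabs_pos_eq by (left; apply Rinv_0_lt_compat; lra).
  pose proof (ln_bound A ltac:(lra)).
  pose proof (ln_bound B ltac:(lra)).
  assert (EA : Rabs (A - 1) = (1 - q) * y * Rabs (R0 y + u y * S y)).
  { unfold A, Af. replace (1 - (1 - q) * y * (R0 y + u y * S y) - 1) with
      (- ((1 - q) * y) * (R0 y + u y * S y)) by ring.
    rewrite Rabs_mult, Rabs_Ropp, Rabs_pos_eq; [ring|]. nra. }
  assert (EB : Rabs (B - 1) = (1 - q) * y * Rabs (T y - u (q * y) * S y)).
  { unfold B, Bf. replace (1 - (1 - q) * y * (T y - u (q * y) * S y) - 1) with
      (- ((1 - q) * y) * (T y - u (q * y) * S y)) by ring.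
    rewrite Rabs_mult, Rabs_Ropp, Rabs_pos_eq; [ring|]. nra. }
  pose proof (Rabs_triang (ln A) (- ln B)) as Htr. rewrite Rabs_Ropp in Htr.
  apply (Rmult_le_reg_l y); auto. rewrite <- Rmult_assoc, Rinv_r, Rmult_1_l by lra.
  unfold Rminus at 1. nra.
Qed.


Lemma adm_pos y : inI b y -> 0 < Af q R0 S u y /\ 0 < Bf q S T u y.
Proof.
  intros Hy. destruct Hu as [_ H]. destruct (H y Hy) as [H1 H2]. unfold Af, Bf. lra.
Qed.

Lemma E_shift x : inI b x -> x <> 0 ->
  Eu q R0 S T u x = Eu q R0 S T u (q * x) * Af q R0 S u x / Bf q S T u x.
Proof.
  intros Hx Hx0. destruct (fE_bounded x Hx) as [M HM].
  assert (Hxp : 0 <= x) by (destruct Hx; lra).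
  rewrite !Eu_eq. rewrite (qint_shift q _ x M Hq Hxp HM).
  destruct (adm_pos x Hx) as [HA HB].
  unfold fE at 1.
  set (L := ln (Af q R0 S u x / Bf q S T u x)).
  set (Q := qint q (fE q R0 S T u) (q * x)).
  replace (/ (1 - q) * ((1 - q) * x * (/ x * L) + Q)) with (L + / (1 - q) * Q)
    by (field; split; lra).
  rewrite exp_plus. unfold L. rewrite exp_ln.
  field. lra. apply Rdiv_lt_0_compat; lra.
Qed.

Lemma E_pos x : 0 < Eu q R0 S T u x.
Proof. rewrite Eu_eq. apply exp_pos. Qed.

Lemma E_lim x : inI b x -> is_lim_seq (fun n => Eu q R0 S T u (q ^ n * x)) 1.
Proof.
  intros Hx. destruct (fE_bounded x Hx) as [M HM].
  assert (Hxp : 0 <= x) by (destruct Hx; lra).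
  pose proof (qint_lim q _ x M Hq Hxp HM) as L.
  apply (is_lim_seq_ext (fun n => exp (/ (1 - q) * qint q (fE q R0 S T u) (q ^ n * x)))).
  intros n; rewrite Eu_eq; reflexivity.
  eapply lim_replace; [|apply exp_0].
  apply (is_lim_seq_continuous exp (fun n => / (1 - q) * qint q (fE q R0 S T u) (q ^ n * x)) 0).
  apply derivable_continuous_pt, derivable_pt_exp.
  eapply lim_replace. apply is_lim_seq_mult'. apply is_lim_seq_const. exact L. ring.
Qed.

Lemma gJ_bounded x : inI b x -> exists M, forall n, Rabs (gJ q R0 S T u (q ^ n * x)) <= M.
Proof.
  intros Hx. apply (conv_bounded _ (S 0 * 1 * / 1)).
  unfold gJ. unfold Rdiv. apply is_lim_seq_mult'. apply is_lim_seq_mult'.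
  apply (seqlim b); auto. apply E_lim; auto.
  apply (is_lim_seq_inv _ (Finite 1)). apply lim_A; auto. simpl. intro H; injection H; lra.
Qed.

Lemma J_shift x : inI b x ->
  Ju q R0 S T u x = Ju q R0 S T u (q * x) + (1 - q) * x * (S x * Eu q R0 S T u x / Af q R0 S u x).
Proof.
  intros Hx. destruct (gJ_bounded x Hx) as [M HM].
  assert (Hxp : 0 <= x) by (destruct Hx; lra).
  rewrite !Ju_eq. rewrite (qint_shift q _ x M Hq Hxp HM). unfold gJ at 1. ring.
Qed.

Lemma J_lim x : inI b x -> is_lim_seq (fun n => Ju q R0 S T u (q ^ n * x)) 0.
Proof.
  intros Hx. destruct (gJ_bounded x Hx) as [M HM].
  assert (Hxp : 0 <= x) by (destruct Hx; lra).
  apply (is_lim_seq_ext (fun n => qint q (gJ q R0 S T u) (q ^ n * x))).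
  intros; rewrite Ju_eq; reflexivity.
  apply (qint_lim q _ x M Hq Hxp HM).
Qed.

End Facts.

Lemma qper b q h x l : 0 < q < 1 -> (forall y, inI b y -> h y = h (q * y)) -> inI b x ->
  is_lim_seq (fun n => h (q ^ n * x)) l -> h x = l.
Proof.
  intros Hq Hp Hx Hl.
  assert (Hn : forall n, h (q ^ n * x) = h x).
  { induction n as [|n IH]. simpl. rewrite Rmult_1_l. reflexivity.
    replace (q ^ (Datatypes.S n) * x) with (q * (q ^ n * x)) by (simpl; ring).
    rewrite <- Hp. exact IH. apply inI_pow; auto. }
  apply (is_lim_seq_ext _ (fun _ => h x)) in Hl; [|exact Hn].
  apply is_lim_seq_unique in Hl. rewrite Lim_seq_const in Hl. now inversion Hl.
Qed.

Lemma part2 q b R0 S T : 0 < q < 1 -> cont_on b R0 -> cont_on b S -> cont_on b T ->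
  (forall (V : R -> R) (t : R) (u0 : R -> R),
     admissible q b R0 S T u0 -> qRiccati_sol q b R0 S T V u0 ->
     Bplus_defined q b R0 S T t u0 ->
     qRiccati_sol q b R0 S T V (Bplus q R0 S T t u0)).
Proof.
  intros Hq HR HS HT V t u0 Hu0 Hsol Hd x Hx Hx0.
  pose proof (E_shift q b R0 S T u0 Hq HR HS HT Hu0 x Hx Hx0) as ES.
  pose proof (J_shift q b R0 S T u0 Hq HR HS HT Hu0 x Hx) as JS.
  destruct (adm_pos q b R0 S T u0 Hu0 x Hx) as [HA HB].
  pose proof (Hd x Hx) as Hdx. pose proof (Hd (q * x) (inI_q b q x Hq Hx)) as Hdq.
  rewrite JS, ES in Hdx.
  rewrite (Hsol x Hx Hx0). unfold qderiv, Bplus. rewrite JS, ES.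
  unfold Af, Bf in *. symmetry. apply alg2; auto; try lra.
Qed.

Lemma part1 q b R0 S T : 0 < q < 1 -> cont_on b R0 -> cont_on b S -> cont_on b T ->
  (forall (t1 t2 : R) (u0 : R -> R),
     admissible q b R0 S T u0 ->
     Bplus_defined q b R0 S T t2 u0 ->
     admissible q b R0 S T (Bplus q R0 S T t2 u0) ->
     Bplus_defined q b R0 S T t1 (Bplus q R0 S T t2 u0) ->
     (forall x, inI b x ->
        1 - (1 - q) * x * (R0 x + S x * Bplus q R0 S T t1 (Bplus q R0 S T t2 u0) x) > 0) ->
     Bplus_defined q b R0 S T (t1 + t2) u0 /\
     (forall x, inI b x ->
        Bplus q R0 S T t1 (Bplus q R0 S T t2 u0) x = Bplus q R0 S T (t1 + t2) u0 x)).
Proof.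
  intros Hq HR HS HT t1 t2 u0 Hu0 Hd2 Hv Hd1 _.
  set (v := Bplus q R0 S T t2 u0) in *.
  assert (HEv : forall y, inI b y ->
     Eu q R0 S T v y * (1 + t2 * Ju q R0 S T u0 y) ^ 2 / Eu q R0 S T u0 y = 1).
  { intros y Hy.
    apply (qper b q (fun y => Eu q R0 S T v y * (1 + t2 * Ju q R0 S T u0 y) ^ 2 / Eu q R0 S T u0 y) y 1 Hq); auto.
    { intros z Hz. destruct (Req_dec z 0) as [->|Hz0].
      { rewrite Rmult_0_r. reflexivity. }
      destruct (adm_pos q b R0 S T u0 Hu0 z Hz) as [HA HB].
        destruct (adm_pos q b R0 S T v Hv z Hz) as [HAv HBv].
        pose proof (E_pos q R0 S T u0 (q * z)).
        pose proof (Hd2 z Hz). pose proof (Hd2 (q * z) (inI_q b q z Hq Hz)).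
        pose proof (E_shift q b R0 S T u0 Hq HR HS HT Hu0 z Hz Hz0) as ES.
        pose proof (J_shift q b R0 S T u0 Hq HR HS HT Hu0 z Hz) as JS.
        pose proof (E_shift q b R0 S T v Hq HR HS HT Hv z Hz Hz0) as ESv.
        unfold Af, Bf in *. cbv beta.
        refine (alg_h ((1 - q) * z) (R0 z) (S z) (T z) (u0 z) (u0 (q * z))
                 (Eu q R0 S T u0 (q * z)) (Ju q R0 S T u0 (q * z)) t2
                 (Eu q R0 S T u0 z) (Ju q R0 S T u0 z) (Eu q R0 S T v z) (Eu q R0 S T v (q * z))
                 _ _ _ _ _ _ _ _ _).
        all: cbv zeta. all: try (apply Rgt_not_eq; lra). all: auto. all: apply Rgt_not_eq; exact HBv. }
    { apply (is_lim_seq_ext (fun n => Eu q R0 S T v (q ^ n * y) *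
          ((1 + t2 * Ju q R0 S T u0 (q ^ n * y)) * (1 + t2 * Ju q R0 S T u0 (q ^ n * y))) /
          Eu q R0 S T u0 (q ^ n * y))). intros; simpl; rewrite Rmult_1_r; reflexivity.
      eapply lim_replace. apply is_lim_seq_div'. apply is_lim_seq_mult'.
      apply (E_lim q b R0 S T v Hq HR HS HT Hv y Hy).
      apply is_lim_seq_mult'; (apply is_lim_seq_plus'; [apply is_lim_seq_const|]);
        (apply is_lim_seq_mult'; [apply is_lim_seq_const|]);
        apply (J_lim q b R0 S T u0 Hq HR HS HT Hu0 y Hy).
      apply (E_lim q b R0 S T u0 Hq HR HS HT Hu0 y Hy). lra. field. } }
  assert (HEv' : forall y, inI b y ->
     Eu q R0 S T v y = Eu q R0 S T u0 y / (1 + t2 * Ju q R0 S T u0 y) ^ 2).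
  { intros y Hy. pose proof (HEv y Hy) as H. pose proof (E_pos q R0 S T u0 y).
    pose proof (Hd2 y Hy).
    assert (Hp : (1 + t2 * Ju q R0 S T u0 y) ^ 2 <> 0) by (apply pow_nonzero; auto).
    transitivity ((Eu q R0 S T v y * (1 + t2 * Ju q R0 S T u0 y) ^ 2 / Eu q R0 S T u0 y) *
       (Eu q R0 S T u0 y / (1 + t2 * Ju q R0 S T u0 y) ^ 2)).
    { field. split; auto. lra. }
    rewrite H. apply Rmult_1_l. }
  assert (HJv : forall y, inI b y ->
     Ju q R0 S T v y - Ju q R0 S T u0 y / (1 + t2 * Ju q R0 S T u0 y) = 0).
  { intros y Hy.
    apply (qper b q (fun y => Ju q R0 S T v y - Ju q R0 S T u0 y / (1 + t2 * Ju q R0 S T u0 y)) y 0 Hq); auto.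
    { intros z Hz.
      destruct (adm_pos q b R0 S T u0 Hu0 z Hz) as [HA HB].
      destruct (adm_pos q b R0 S T v Hv z Hz) as [HAv HBv].
      pose proof (Hd2 z Hz). pose proof (Hd2 (q * z) (inI_q b q z Hq Hz)).
      pose proof (J_shift q b R0 S T u0 Hq HR HS HT Hu0 z Hz) as JS.
      pose proof (J_shift q b R0 S T v Hq HR HS HT Hv z Hz) as JSv.
      pose proof (HEv' z Hz) as EE.
      unfold Af, Bf in *. cbv beta.
      refine (alg_k ((1 - q) * z) (R0 z) (S z) (u0 z) t2 (Eu q R0 S T u0 z) (Ju q R0 S T u0 z)
                (Ju q R0 S T u0 (q * z)) (Ju q R0 S T v z) (Ju q R0 S T v (q * z)) (Eu q R0 S T v z)
                _ _ _ _ _ _ _).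
      all: cbv zeta. all: try (apply Rgt_not_eq; lra). all: auto. all: apply Rgt_not_eq; exact HAv. }
    { eapply lim_replace. apply is_lim_seq_minus'.
      apply (J_lim q b R0 S T v Hq HR HS HT Hv y Hy).
      apply is_lim_seq_div'. apply (J_lim q b R0 S T u0 Hq HR HS HT Hu0 y Hy).
      apply is_lim_seq_plus'. apply is_lim_seq_const.
      apply is_lim_seq_mult'. apply is_lim_seq_const. apply (J_lim q b R0 S T u0 Hq HR HS HT Hu0 y Hy).
      rewrite Rmult_0_r, Rplus_0_r. lra. field. } }
  assert (Hfin : forall x, inI b x ->
     Bplus q R0 S T t1 v x = Bplus q R0 S T (t1 + t2) u0 x /\ 1 + (t1 + t2) * Ju q R0 S T u0 x <> 0).
  { intros x Hx. pose proof (Hd1 x Hx) as H1. pose proof (Hd2 x Hx) as H2.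
    assert (EJ : Ju q R0 S T v x = Ju q R0 S T u0 x / (1 + t2 * Ju q R0 S T u0 x))
      by (pose proof (HJv x Hx); lra).
    rewrite EJ in H1. unfold Bplus at 1. rewrite (HEv' x Hx), EJ.
    unfold v, Bplus. apply alg_comp; auto. }
  split.
  { intros x Hx. apply (Hfin x Hx). }
  { intros x Hx. apply (Hfin x Hx). }
Qed.

Lemma alg_c' a R S T u0x u0qx ux wqx e j Ey Jy :
  1 - a*(R + u0x*S) <> 0 -> 1 - a*(T - u0qx*S) <> 0 -> 1 - a*(R + ux*S) <> 0 ->
  ux - u0x <> 0 -> wqx <> 0 ->
  Ey = e*(1 - a*(R + u0x*S))/(1 - a*(T - u0qx*S)) -> Jy = j + a*(S*Ey/(1 - a*(R + u0x*S))) ->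
  (ux - u0x) * (1 - a*(T - u0qx*S)) = wqx * (1 - a*(R + ux*S)) ->
  Ey/(ux - u0x) - Jy = e/wqx - j.
Proof.
  intros H1 H2 H3 H4 H5 H6 H7 H8.
  assert (E : u0x + (ux - u0x) = ux) by ring.
  refine (alg_c a R S T u0x u0qx (ux - u0x) wqx e j Ey Jy _ _ _ _ _ _ _ _); cbv zeta; rewrite ?E; auto.
Qed.

Lemma part3 q b R0 S T : 0 < q < 1 -> cont_on b R0 -> cont_on b S -> cont_on b T ->
  (forall (V : R -> R) (u0 u : R -> R),
     admissible q b R0 S T u0 -> qRiccati_sol q b R0 S T V u0 ->
     cont_on b u -> qRiccati_sol q b R0 S T V u ->
     (forall x, inI b x -> 1 - (1 - q) * x * (R0 x + S x * u x) > 0) ->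
     Bplus_defined q b R0 S T (u 0 - u0 0) u0 /\
     (forall x, inI b x -> u x = Bplus q R0 S T (u 0 - u0 0) u0 x)).
Proof.
  intros Hq HR HS HT V u0 u Hu0 Hs0 Hcu Hs HAu.
  set (t := u 0 - u0 0).
  set (E := Eu q R0 S T u0). set (J := Ju q R0 S T u0).
  assert (HAu' : forall y, inI b y -> 1 - (1 - q) * y * (R0 y + u y * S y) > 0).
  { intros y Hy. specialize (HAu y Hy). replace (u y * S y) with (S y * u y) by ring. exact HAu. }
  assert (Wrel : forall y, inI b y -> y <> 0 ->
     (u y - u0 y) * (1 - (1 - q) * y * (T y - u0 (q * y) * S y))
     = (u (q * y) - u0 (q * y)) * (1 - (1 - q) * y * (R0 y + u y * S y))).
  { intros y Hy Hy0. apply (alg_w _ _ _ _ (V y)).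
    apply Rmult_integral_contrapositive; split; lra.
    apply (Hs y Hy Hy0). apply (Hs0 y Hy Hy0). }
  assert (Wlim : forall x, inI b x -> is_lim_seq (fun n => u (q ^ n * x) - u0 (q ^ n * x)) t).
  { intros x Hx. apply is_lim_seq_minus'. apply (seqlim b); auto.
    apply (seqlim b); auto. apply Hu0. }
  assert (Wq0 : forall y, inI b y -> u y - u0 y = 0 -> u (q * y) - u0 (q * y) = 0).
  { intros y Hy H0. destruct (Req_dec y 0) as [->|Hy0]. rewrite Rmult_0_r; exact H0.
    pose proof (Wrel y Hy Hy0) as W. rewrite H0, Rmult_0_l in W. specialize (HAu' y Hy).
    symmetry in W. apply Rmult_integral in W as [W'|W']; auto. lra. }
  assert (Wqn : forall y, inI b y -> u y - u0 y <> 0 -> u (q * y) - u0 (q * y) <> 0).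
  { intros y Hy H0 Hc. destruct (Req_dec y 0) as [->|Hy0]. rewrite Rmult_0_r in Hc; auto.
    pose proof (Wrel y Hy Hy0) as W. rewrite Hc, Rmult_0_l in W.
    destruct (adm_pos q b R0 S T u0 Hu0 y Hy) as [_ HB]. unfold Bf in HB.
    apply Rmult_integral in W as [W'|W']; auto. lra. }
  assert (Ct : forall x, inI b x -> u x - u0 x <> 0 -> t * (E x / (u x - u0 x) - J x) = 1).
  { intros x Hx Hw. set (c := E x / (u x - u0 x) - J x).
    assert (Hn : forall n, u (q ^ n * x) - u0 (q ^ n * x) <> 0 /\
        E (q ^ n * x) / (u (q ^ n * x) - u0 (q ^ n * x)) - J (q ^ n * x) = c).
    { induction n as [|n [IH1 IH2]].
      { simpl. rewrite Rmult_1_l. split; auto. }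
      replace (q ^ (Datatypes.S n) * x) with (q * (q ^ n * x)) by (simpl; ring).
      pose proof (inI_pow b q x n Hq Hx) as Hy. set (y := q ^ n * x) in *.
      assert (Hwq := Wqn y Hy IH1). split; auto. rewrite <- IH2.
      destruct (Req_dec y 0) as [Hy0|Hy0]. { rewrite Hy0, Rmult_0_r. reflexivity. }
      destruct (adm_pos q b R0 S T u0 Hu0 y Hy) as [HA HB]. pose proof (HAu' y Hy).
      pose proof (E_shift q b R0 S T u0 Hq HR HS HT Hu0 y Hy Hy0) as ES.
      pose proof (J_shift q b R0 S T u0 Hq HR HS HT Hu0 y Hy) as JS.
      unfold Af, Bf in *. symmetry.
      apply (alg_c' ((1 - q) * y) (R0 y) (S y) (T y) (u0 y) (u0 (q * y)) (u y)
               (u (q * y) - u0 (q * y)) (E (q * y)) (J (q * y)) (E y) (J y));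
        try (apply Rgt_not_eq; lra); auto.
      }
    assert (L1 : is_lim_seq (fun n => (u (q ^ n * x) - u0 (q ^ n * x)) * (J (q ^ n * x) + c)) (t * (0 + c))).
    { apply is_lim_seq_mult'. apply Wlim; auto. apply is_lim_seq_plus'.
      apply (J_lim q b R0 S T u0 Hq HR HS HT Hu0 x Hx). apply is_lim_seq_const. }
    apply (is_lim_seq_ext _ (fun n => E (q ^ n * x))) in L1.
    2: { intros n. destruct (Hn n) as [H1 H2]. rewrite <- H2. field. auto. }
    pose proof (E_lim q b R0 S T u0 Hq HR HS HT Hu0 x Hx) as L2.
    apply is_lim_seq_unique in L1. apply is_lim_seq_unique in L2. fold E in L2. rewrite L1 in L2.
    assert (Hc : t * (0 + c) = 1) by (now inversion L2).
    rewrite Rplus_0_l in Hc. exact Hc. }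
  destruct (Req_dec t 0) as [Ht|Ht].
  { assert (Hz : forall x, inI b x -> u x - u0 x = 0).
    { intros x Hx. destruct (Req_dec (u x - u0 x) 0) as [H|H]; auto.
      pose proof (Ct x Hx H) as C. rewrite Ht, Rmult_0_l in C. lra. }
    fold t. rewrite Ht. split.
    { intros x Hx. rewrite Rmult_0_l, Rplus_0_r. lra. }
    { intros x Hx. unfold Bplus. pose proof (Hz x Hx). rewrite Rmult_0_l. unfold Rdiv. rewrite Rmult_0_l. lra. } }
  assert (Hnz : forall x, inI b x -> u x - u0 x <> 0).
  { intros x Hx H.
    assert (Hn : forall n, u (q ^ n * x) - u0 (q ^ n * x) = 0).
    { induction n as [|n IH]. simpl. rewrite Rmult_1_l. exact H.
      replace (q ^ (Datatypes.S n) * x) with (q * (q ^ n * x)) by (simpl; ring).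
      apply Wq0; auto. apply inI_pow; auto. }
    pose proof (Wlim x Hx) as L. apply (is_lim_seq_ext _ (fun _ => 0)) in L; [|exact Hn].
    apply is_lim_seq_unique in L. rewrite Lim_seq_const in L. inversion L. auto. }
  fold t.
  assert (Key : forall x, inI b x -> 1 + t * J x = t * E x / (u x - u0 x)).
  { intros x Hx. pose proof (Ct x Hx (Hnz x Hx)) as C. pose proof (Hnz x Hx).
    transitivity (1 + t * J x + (t * (E x / (u x - u0 x) - J x) - 1)). rewrite C; ring. field. auto. }
  split.
  { intros x Hx. unfold J in Key. rewrite (Key x Hx). pose proof (E_pos q R0 S T u0 x) as HE.
    pose proof (Hnz x Hx). unfold Rdiv. apply Rmult_integral_contrapositive. split.
    apply Rmult_integral_contrapositive. split; auto. apply Rgt_not_eq; exact HE.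
    apply Rinv_neq_0_compat; auto. }
  { intros x Hx. unfold Bplus. fold E J. rewrite (Key x Hx). pose proof (E_pos q R0 S T u0 x) as HE.
    assert (HE' : E x <> 0) by (apply Rgt_not_eq; exact HE).
    pose proof (Hnz x Hx). field. repeat split; auto. }
Qed.

Theorem proposition4 (q : R) (b : Rbar) (R0 S T : R -> R) :
  0 < q < 1 -> Rbar_lt (Finite 0) b ->
  cont_on b R0 -> cont_on b S -> cont_on b T ->
  (* composition law *)
  (forall (t1 t2 : R) (u0 : R -> R),
     admissible q b R0 S T u0 ->
     Bplus_defined q b R0 S T t2 u0 ->
     admissible q b R0 S T (Bplus q R0 S T t2 u0) ->
     Bplus_defined q b R0 S T t1 (Bplus q R0 S T t2 u0) ->
     (forall x, inI b x ->
        1 - (1 - q) * x * (R0 x + S x * Bplus q R0 S T t1 (Bplus q R0 S T t2 u0) x) > 0) ->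
     Bplus_defined q b R0 S T (t1 + t2) u0 /\
     (forall x, inI b x ->
        Bplus q R0 S T t1 (Bplus q R0 S T t2 u0) x = Bplus q R0 S T (t1 + t2) u0 x))
  /\
  (* B^+_t maps solutions of the q-Riccati equation to solutions (where defined) *)
  (forall (V : R -> R) (t : R) (u0 : R -> R),
     admissible q b R0 S T u0 -> qRiccati_sol q b R0 S T V u0 ->
     Bplus_defined q b R0 S T t u0 ->
     qRiccati_sol q b R0 S T V (Bplus q R0 S T t u0))
  /\
  (* transitivity on solutions *)
  (forall (V : R -> R) (u0 u : R -> R),
     admissible q b R0 S T u0 -> qRiccati_sol q b R0 S T V u0 ->
     cont_on b u -> qRiccati_sol q b R0 S T V u ->
     (forall x, inI b x -> 1 - (1 - q) * x * (R0 x + S x * u x) > 0) ->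
     Bplus_defined q b R0 S T (u 0 - u0 0) u0 /\
     (forall x, inI b x -> u x = Bplus q R0 S T (u 0 - u0 0) u0 x)).
Proof.
  intros Hq Hb HR HS HT. split; [|split].
  apply part1; auto. apply part2; auto. apply part3; auto.
Qed.
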